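(* Let $\mathcal{K}$ be a finite set of oriented knots closed under the action of the group $\mathcal{G}=\{1,r,m,rm\}$, and let $\mathcal{R}$ be a set of representatives of the $\mathcal{G}$-orbits in $\mathcal{K}$. Let $\mathcal{S}=(Q_1,\dots,Q_n)$ be a list of finite quandles, let $C(K)=(\mathrm{Col}_{Q_1}(K),\dots,\mathrm{Col}_{Q_n}(K))$, and write $K\sim K'$ iff $C(K)=C(K')$. Suppose that for all $k,k'\in\mathcal{R}$: (A) if $k\neq k'$ then $k\not\sim k'$; (B) if $k\neq k'$ then $k\not\sim m(k')$; (C) if $k\neq k'$ then $m(k)\not\sim m(k')$. Then for all $K,K'\in\mathcal{K}$ with $K\sim K'$ we have $\mathcal{G}(K)=\mathcal{G}(K')$. If in addition (D) $m(k)\not\sim k$ for every $k\in\mathcal{R}$ that is chiral or negative amphicheiral, then for all $K,K'\in\mathcal{K}$ with $K\sim K'$ we have $K'=K$ or $K'=rm(K)$.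
   Context: A quandle is a set $X$ with a binary operation $*$ such that $a*a=a$ for all $a$; for all $b,c$ there is a unique $a$ with $a*b=c$; and $(a*b)*c=(a*c)*(b*c)$. A coloring of an oriented knot diagram by a quandle $X$ is a map from arcs to $X$ such that at each crossing with over-arc colored $y$, the under-arc on one side (fixed convention depending on the over-arc orientation) colored $x$ forces the other under-arc to be colored $x*y$; equivalently a quandle homomorphism from the fundamental quandle of the knot to $X$. $\mathrm{Col}_Q(K)$ is the number of colorings of $K$ by $Q$, a knot invariant. $m(K)$ denotes the mirror image of $K$, $r(K)$ denotes $K$ with reversed orientation, and $K=K'$ means equality up to orientation-preserving homeomorphism of $S^3$ respecting knot orientations. $\mathcal{G}=\{1,r,m,rm\}$ acts on knot types and $\mathcal{G}(K)=\{K,r(K),m(K),rm(K)\}$ is the orbit. $K$ is chiral if none of $K=r(K)$, $K=m(K)$, $K=rm(K)$ holds; $K$ is negative amphicheiral if its only symmetry is $K=rm(K)$. *)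

(* Defs.v *)
(* Knots are modelled combinatorially as closed braids
   (Alexander's theorem) and knot equality as Markov equivalence
   (Markov's theorem). *)
From mathcomp Require Import all_boot.
Set Implicit Arguments. Unset Strict Implicit. Unset Printing Implicit Defensive.

Record fquandle := FQuandle {
  qcar :> finType;
  qop : qcar -> qcar -> qcar;
  qidem : forall a, qop a a = a;
  qrinv : forall b c, exists! a, qop a b = c;
  qdist : forall a b c, qop (qop a b) c = qop (qop a c) (qop b c)
}.

Definition qrdiv (Q : fquandle) (c b : Q) : Q :=
  odflt c [pick a : Q | qop a b == c].

(* A letter (i, true) is sigma_i, (i, false) is sigma_i^{-1} (0-based,
   acting on strands i and i+1).  A braid is (number of strands, word). *)
Definition letter := (nat * bool)%type.
Definition braid := (nat * seq letter)%type.

Definition bwf (b : braid) : Prop :=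
  0 < b.1 /\ all (fun l : letter => l.1.+1 < b.1) b.2.

Definition lperm (l : letter) (j : nat) : nat :=
  if j == l.1 then l.1.+1 else if j == l.1.+1 then l.1 else j.

Definition bperm (b : braid) (j : nat) : nat :=
  foldl (fun k l => lperm l k) j b.2.

(* the closure of b is a knot: well formed, permutation an n-cycle *)
Definition is_knot (b : braid) : Prop :=
  bwf b /\ forall j, j < b.1 -> exists t, iter t (bperm b) 0 = j.

Inductive mstep : braid -> braid -> Prop :=
| ms_cancel n u v i s :
    mstep (n, u ++ (i, s) :: (i, ~~ s) :: v) (n, u ++ v)
| ms_comm n u v i j : i.+1 < j ->
    mstep (n, u ++ (i, true) :: (j, true) :: v) (n, u ++ (j, true) :: (i, true) :: v)
| ms_braid n u v i :
    mstep (n, u ++ [:: (i, true); (i.+1, true); (i, true)] ++ v)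
          (n, u ++ [:: (i.+1, true); (i, true); (i.+1, true)] ++ v)
| ms_conj n u v : mstep (n, u ++ v) (n, v ++ u)
| ms_stab n w s : 0 < n -> mstep (n, w) (n.+1, rcons w (n.-1, s)).

Inductive keq : braid -> braid -> Prop :=
| keq_refl b : keq b b
| keq_sym a b : keq a b -> keq b a
| keq_trans a b c : keq a b -> keq b c -> keq a c
| keq_step a b : bwf a -> bwf b -> mstep a b -> keq a b.

Definition bmirror (b : braid) : braid := (b.1, map (fun l : letter => (l.1, ~~ l.2)) b.2).
Definition brev (b : braid) : braid := (b.1, rev b.2).

Inductive gsym := gId | gR | gM | gRM.
Definition gact (g : gsym) (b : braid) : braid :=
  match g with gId => b | gR => brev b | gM => bmirror b | gRM => brev (bmirror b) end.

(* orbit equality G(K) = G(K') as sets of knot types *)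
Definition same_orbit (K K' : braid) : Prop :=
  forall X, (exists g, keq X (gact g K)) <-> (exists g, keq X (gact g K')).

Definition chiral (K : braid) : Prop :=
  ~ keq K (brev K) /\ ~ keq K (bmirror K) /\ ~ keq K (brev (bmirror K)).
Definition neg_amphicheiral (K : braid) : Prop :=
  keq K (brev (bmirror K)) /\ ~ keq K (brev K) /\ ~ keq K (bmirror K).

Definition act_letter (Q : fquandle) (l : letter) (x : seq Q) : seq Q :=
  match drop l.1 x with
  | a :: c :: post =>
      take l.1 x ++ (if l.2 then [:: c; qop a c] else [:: qrdiv c a; a]) ++ post
  | _ => x
  end.

Definition act (Q : fquandle) (w : seq letter) (x : seq Q) : seq Q :=
  foldl (fun y l => act_letter l y) x w.

(* Col_Q(closure b): colorings of the closed braid = fixed color vectors *)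
Definition col (Q : fquandle) (b : braid) : nat :=
  #|[pred t : (b.1).-tuple Q | act b.2 (val t) == val t]|.

Definition colvec (S : seq fquandle) (K : braid) : seq nat := map (fun Q => col Q K) S.
Definition csim (S : seq fquandle) (K K' : braid) : Prop := colvec S K = colvec S K'.

Definition inK (Ks : seq braid) (K : braid) : Prop := exists2 K0, K0 \in Ks & keq K K0.

Definition G_closed_knot_set (Ks : seq braid) : Prop :=
  (forall K, K \in Ks -> is_knot K) /\
  (forall K g, inK Ks K -> inK Ks (gact g K)).

Definition orbit_reps (Ks Rs : seq braid) : Prop :=
  (forall k, k \in Rs -> inK Ks k) /\
  (forall K, inK Ks K -> exists k g, k \in Rs /\ keq K (gact g k)) /\
  (forall k k' g, k \in Rs -> k' \in Rs -> keq k' (gact g k) -> keq k k').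

(* Main.v *)
Require Import Defs.
From mathcomp Require Import all_boot.
From Stdlib Require Import Classical.
Set Implicit Arguments. Unset Strict Implicit. Unset Printing Implicit Defensive.

Section Act.
Variable Q : fquandle.

Lemma qrdivP (c b : Q) : qop (qrdiv c b) b = c.
Proof.
rewrite /qrdiv; case: pickP => [a /eqP //|H]; exfalso.
have [a [Ha _]] := qrinv b c; by have := H a; rewrite Ha eqxx.
Qed.

Lemma qop_inj (a a' b : Q) : qop a b = qop a' b -> a = a'.
Proof.
move=> E; have [x [_ U]] := qrinv b (qop a b).
by rewrite -(U a erefl) -(U a' (esym E)).
Qed.

Lemma qrdivK (a b : Q) : qrdiv (qop a b) b = a.
Proof. by apply: (@qop_inj _ _ b); rewrite qrdivP. Qed.

Lemma size_act_letter l (x : seq Q) : size (act_letter l x) = size x.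
Proof.
rewrite /act_letter.
have S : size x = size (take l.1 x) + size (drop l.1 x) by rewrite -size_cat cat_take_drop.
case E: (drop l.1 x) S => [|a [|c post]] // ->.
by rewrite !size_cat; case: l.2.
Qed.

Lemma size_act w (x : seq Q) : size (act w x) = size x.
Proof. by elim: w x => //= l w IH x; rewrite IH size_act_letter. Qed.

Lemma act_cons l w (x : seq Q) : act (l :: w) x = act w (act_letter l x).
Proof. by []. Qed.

Lemma act_cat u v (x : seq Q) : act (u ++ v) x = act v (act u x).
Proof. by rewrite /act foldl_cat. Qed.

Lemma act_rcons w l (x : seq Q) : act (rcons w l) x = act_letter l (act w x).
Proof. by rewrite /act foldl_rcons. Qed.

Lemma act_letter_catr i s (p q : seq Q) : size p <= i ->
  act_letter (i, s) (p ++ q) = p ++ act_letter (i - size p, s) q.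
Proof.
move=> Hp; rewrite /act_letter /= drop_cat take_cat ltnNge Hp /=.
by case: (drop (i - size p) q) => [|a [|c post]] //; rewrite -catA.
Qed.

Lemma act_letter_catl i s (p q : seq Q) : i.+1 < size p ->
  act_letter (i, s) (p ++ q) = act_letter (i, s) p ++ q.
Proof.
move=> Hp; rewrite /act_letter /= drop_cat take_cat ltnW //.
have : 1 < size (drop i p) by rewrite size_drop ltn_subRL addn1.
by case: (drop i p) => [|a [|c post]] //= _; rewrite -!catA.
Qed.

Lemma act_letter_small i s (x : seq Q) : size x <= i.+1 -> act_letter (i, s) x = x.
Proof.
move=> H; rewrite /act_letter /=.
have : size (drop i x) <= 1 by rewrite size_drop leq_subLR addn1.
by case: (drop i x) => [|a [|c post]].
Qed.

Lemma split_at i (x : seq Q) : i <= size x -> exists p q, size p = i /\ x = p ++ q.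
Proof.
move=> H; exists (take i x), (drop i x); split; last by rewrite cat_take_drop.
by rewrite size_take; case: ltngtP H => // ->.
Qed.

Lemma act_letterK i s (x : seq Q) : act_letter (i, ~~ s) (act_letter (i, s) x) = x.
Proof.
case: (leqP (size x) i.+1) => H.
  by rewrite !act_letter_small // size_act_letter.
have [p [q [Sp Ex]]] := split_at (ltnW (ltnW H)); subst x.
rewrite act_letter_catr ?Sp // subnn act_letter_catr ?Sp // subnn; congr (_ ++ _).
move: H; rewrite size_cat Sp -addn2 leq_add2l.
case: q => [|a [|c post]] //= _; case: s => /=.
  by rewrite /act_letter /= qrdivK.
by rewrite /act_letter /= qrdivP.
Qed.

Lemma act_letter_comm i j (x : seq Q) : i.+1 < j ->
  act_letter (j, true) (act_letter (i, true) x) = act_letter (i, true) (act_letter (j, true) x).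
Proof.
move=> Hij.
case: (leqP (size x) i.+1) => H.
  have Hj : size x <= j.+1 by apply: leq_trans H _; rewrite ltnW // ltnW.
  by rewrite !act_letter_small ?size_act_letter...
have [p [q [Sp Ex]]] := split_at H; subst x.
rewrite act_letter_catl ?Sp // (act_letter_catr (i:=j)) ?size_act_letter ?Sp //.
rewrite (act_letter_catr (i:=j)) ?Sp //.
by rewrite act_letter_catl ?Sp.
Qed.

Lemma act_letter_braid i (x : seq Q) : i.+2 < size x ->
  act_letter (i, true) (act_letter (i.+1, true) (act_letter (i, true) x)) =
  act_letter (i.+1, true) (act_letter (i, true) (act_letter (i.+1, true) x)).
Proof.
move=> H; have [p [q [Sp Ex]]] := split_at (ltnW (ltnW (ltnW H))); subst x.
rewrite !act_letter_catr ?Sp ?leqnSn // subnn subSnn.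
move: H; rewrite size_cat Sp -addn3 leq_add2l.
case: q => [|a [|b [|c post]]] //= _.
by rewrite /act_letter /= qdist.
Qed.

End Act.

Definition flip (l : letter) : letter := (l.1, ~~ l.2).
Definition winv (w : seq letter) : seq letter := rev (map flip w).

Section Count.
Variable Q : fquandle.

Lemma actK w (x : seq Q) : act (winv w) (act w x) = x.
Proof.
elim: w x => //= l w IH x.
rewrite /winv /= rev_cons act_rcons -/(winv w) IH.
by case: l => i s; rewrite /flip act_letterK.
Qed.

Lemma winvK w : winv (winv w) = w.
Proof.
rewrite /winv map_rev revK -map_comp; elim: w => //= l w ->.
by case: l => i s /=; rewrite /flip /= negbK.
Qed.

Lemma actKV w (x : seq Q) : act w (act (winv w) x) = x.
Proof. by rewrite -{1}(winvK w) actK. Qed.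

Variable n : nat.

Definition tact w (t : n.-tuple Q) : n.-tuple Q := insubd t (act w t).

Lemma tactE w t : val (tact w t) = act w (val t).
Proof. by rewrite /tact insubdK // unfold_in size_act size_tuple. Qed.

Lemma colE w : col Q (n, w) = #|[pred t | tact w t == t]|.
Proof. by apply: eq_card => t; rewrite !inE -val_eqE tactE. Qed.

Lemma tactK w : cancel (tact w) (tact (winv w)).
Proof. by move=> t; apply: val_inj; rewrite !tactE actK. Qed.

Lemma tactKV w : cancel (tact (winv w)) (tact w).
Proof. by move=> t; apply: val_inj; rewrite !tactE actKV. Qed.

Lemma col_ext w1 w2 : (forall x : seq Q, size x = n -> act w1 x = act w2 x) ->
  col Q (n, w1) = col Q (n, w2).
Proof.
move=> H; apply: eq_card => t; rewrite !inE H // size_tuple //.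
Qed.

Lemma col_winv w : col Q (n, winv w) = col Q (n, w).
Proof.
rewrite !colE; apply: eq_card => t; rewrite !inE.
apply/eqP/eqP => E.
  by rewrite -{1}E tactKV.
by rewrite -{1}E tactK.
Qed.

Lemma card_fix_swap (T : finType) (f g : T -> T) : injective f -> injective g ->
  #|[pred t | g (f t) == t]| = #|[pred t | f (g t) == t]|.
Proof.
move=> fi gi.
have H : forall (f g : T -> T), injective f ->
    #|[pred t | g (f t) == t]| <= #|[pred t | f (g t) == t]|.
  move=> f' g' fi'; rewrite -(card_imset [pred t | g' (f' t) == t] fi').
  apply: subset_leq_card; apply/subsetP => y /imsetP [x Hx ->].
  by rewrite !inE in Hx *; rewrite (eqP Hx).
by apply/eqP; rewrite eqn_leq !H.
Qed.

Lemma col_conj u v : col Q (n, u ++ v) = col Q (n, v ++ u).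
Proof.
rewrite !colE.
have E : forall a b t, tact (a ++ b) t = tact b (tact a t).
  by move=> a b t; apply: val_inj; rewrite !tactE act_cat.
transitivity #|[pred t | tact v (tact u t) == t]|.
  by apply: eq_card => t; rewrite !inE E.
transitivity #|[pred t | tact u (tact v t) == t]|; last first.
  by apply: eq_card => t; rewrite !inE E.
by apply: card_fix_swap; apply: can_inj (tactK _).
Qed.

End Count.

Section Stab.
Variable Q : fquandle.

Lemma act_catl_w w (p q : seq Q) : all (fun l : letter => l.1.+1 < size p) w ->
  act w (p ++ q) = act w p ++ q.
Proof.
elim: w p => //= [[i s]] w IH p /andP [H1 H2].
rewrite act_letter_catl // IH // size_act_letter //.
Qed.

Lemma fixS m s w (p : seq Q) z : size p = m.+1 ->
  all (fun l : letter => l.1.+1 < m.+1) w ->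
  (act (rcons w (m, s)) (rcons p z) == rcons p z) = (act w p == p) && (z == last z p).
Proof.
case/lastP: p => [//|p' pa] Sp Hw.
rewrite act_rcons -cats1 act_catl_w ?Sp // last_rcons.
have := size_act w (rcons p' pa); rewrite Sp.
case: (lastP (act w (rcons p' pa))) => [//|y' a] Sy.
have Sy' : size y' = m by move: Sy; rewrite size_rcons => -[].
have Sp' : size p' = m by move: Sp; rewrite size_rcons => -[].
rewrite cat_rcons act_letter_catr ?Sy' // subnn cats1 -cats1 cat_rcons eqseq_cat ?Sy' ?Sp' // eqseq_rcons.
case: (y' == p') => //=.
case: s => /=.
  rewrite /act_letter /= !eqseq_cons andbT.
  apply/idP/idP.
    case/andP => /eqP E1 /eqP E2; subst z.
    rewrite eqxx andbT; apply/eqP; apply: (@qop_inj _ _ _ pa); by rewrite E2 qidem.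
  by case/andP => /eqP -> /eqP ->; rewrite qidem !eqxx.
rewrite /act_letter /= !eqseq_cons andbT.
apply/idP/idP.
  case/andP => /eqP E1 /eqP E2; subst a.
  have -> : pa = z by rewrite -E1 -{1}(qidem z) qrdivK.
  by rewrite eqxx.
by case/andP => /eqP -> /eqP ->; rewrite -{1}(qidem pa) qrdivK !eqxx.
Qed.

End Stab.

Section Stab2.
Variable Q : fquandle.

Lemma last_nonnil (T : Type) d1 d2 (b : seq T) : 0 < size b -> last d1 b = last d2 b.
Proof. by case: b. Qed.

Lemma col_stab m s w : all (fun l : letter => l.1.+1 < m.+1) w ->
  col Q (m.+1, w) = col Q (m.+2, rcons w (m, s)).
Proof.
move=> Hw.
pose phi (t : m.+1.-tuple Q) : m.+2.-tuple Q := [tuple of rcons t (last (thead t) t)].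
have phi_inj : injective phi.
  move=> t1 t2 /(congr1 val) /= /rcons_inj [E _]; exact: val_inj.
rewrite /col /= -(card_imset _ phi_inj); apply: eq_card => t'.
rewrite inE; apply/imsetP/idP.
  case=> t Ht ->; rewrite inE in Ht.
  by rewrite /= fixS ?size_tuple // Ht (last_nonnil _ (thead t)) ?size_tuple // eqxx.
move=> H.
have Et : val t' = thead t' :: behead t' by rewrite {1}(tuple_eta t').
move: H; rewrite Et lastI fixS ?size_belast ?size_behead ?size_tuple //.
case/andP => H1 /eqP H2.
exists [tuple of belast (thead t') (behead t')]; first by rewrite inE.
apply: val_inj; rewrite /= {1}Et lastI; congr rcons.
by rewrite H2; apply: last_nonnil; rewrite size_belast size_behead size_tuple.
Qed.

End Stab2.

Section Inv.
Variable Q : fquandle.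

Lemma col_mstep a b : bwf a -> bwf b -> mstep a b -> col Q a = col Q b.
Proof.
move=> Ha Hb H; case: a b / H Ha Hb => //.
- move=> n u v i s _ _; apply: col_ext => x _.
  by rewrite !act_cat !act_cons act_letterK.
- move=> n u v i j Hij _ _; apply: col_ext => x _.
  by rewrite !act_cat !act_cons act_letter_comm.
- move=> n u v i Ha _; apply: col_ext => x Sx.
  move: Ha => [_]; rewrite /= !all_cat /= => /and5P [_ _ H _ _].
  rewrite !act_cat /= act_letter_braid // size_act Sx //.
- move=> n u v _ _; exact: col_conj.
- move=> [//|m] w s _ Ha _; move: Ha => [_ /= Hw]; exact: col_stab.
Qed.

Lemma col_keq a b : keq a b -> col Q a = col Q b.
Proof.
induction 1 as [b|a b _ IH|a b c _ IH1 _ IH2|a b Ha Hb H].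
- by [].
- by rewrite IH.
- by rewrite IH1 IH2.
- exact: col_mstep.
Qed.

End Inv.

Definition wfw n (w : seq letter) := all (fun l : letter => l.1.+1 < n) w.

Lemma wfw_cat n u v : wfw n (u ++ v) = wfw n u && wfw n v.
Proof. exact: all_cat. Qed.

Lemma wfw_winv n w : wfw n (winv w) = wfw n w.
Proof. by rewrite /wfw /winv all_rev all_map. Qed.

Lemma keq_cancel n u v l : 0 < n -> wfw n u -> wfw n v -> l.1.+1 < n ->
  keq (n, u ++ l :: flip l :: v) (n, u ++ v).
Proof.
case: l => i s /= n0 Hu Hv Hi; rewrite /wfw in Hu Hv; apply: keq_step; last exact: ms_cancel.
  by split => //=; rewrite all_cat Hu /=; apply/and3P.
by split => //=; rewrite all_cat Hu Hv.
Qed.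

Lemma keq_ins n w : forall u v, 0 < n -> wfw n u -> wfw n v -> wfw n w ->
  keq (n, u ++ v) (n, u ++ w ++ winv w ++ v).
Proof.
elim: w => [|a w IH] u v n0 Hu Hv Hw; first exact: keq_refl.
move: Hw => /= /andP [Ha Hw].
have -> : u ++ (a :: w) ++ winv (a :: w) ++ v = rcons u a ++ w ++ winv w ++ flip a :: v.
  by rewrite /winv /= rev_cons -/(winv w) -cats1 cat_rcons -!catA.
apply: keq_trans (IH _ _ n0 _ _ Hw); last by rewrite /= Ha Hv.
  by rewrite cat_rcons; apply: keq_sym; apply: keq_cancel.
by rewrite -cats1 wfw_cat Hu /= Ha.
Qed.

Lemma keq_inv n x y : 0 < n -> wfw n x -> wfw n y ->
  (forall u v, wfw n u -> wfw n v -> keq (n, u ++ x ++ v) (n, u ++ y ++ v)) ->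
  forall u v, wfw n u -> wfw n v -> keq (n, u ++ winv x ++ v) (n, u ++ winv y ++ v).
Proof.
move=> n0 Hx Hy R u v Hu Hv.
have Hx' : wfw n (winv x) by rewrite wfw_winv.
have Hy' : wfw n (winv y) by rewrite wfw_winv.
apply: keq_trans (@keq_ins n (winv y) u (winv x ++ v) n0 Hu _ Hy') _; first by rewrite wfw_cat Hx' Hv.
rewrite winvK.
have -> : u ++ winv y ++ y ++ winv x ++ v = (u ++ winv y) ++ y ++ (winv x ++ v) by rewrite -!catA.
apply: keq_trans (keq_sym (R _ _ _ _)) _; first by rewrite wfw_cat Hu Hy'.
  by rewrite wfw_cat Hx' Hv.
rewrite -catA; apply: keq_sym.
have -> : u ++ winv y ++ v = (u ++ winv y) ++ v by rewrite catA.
rewrite (catA u (winv y) (x ++ _)); apply: keq_ins => //; by rewrite wfw_cat Hu Hy'.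
Qed.

Lemma bwf_mirror b : bwf b -> bwf (bmirror b).
Proof. by case: b => n w [n0 H]; split => //=; rewrite all_map. Qed.

Lemma bwf_rev b : bwf b -> bwf (brev b).
Proof. by case: b => n w [n0 H]; split => //=; rewrite all_rev. Qed.

Lemma bwfP n w : bwf (n, w) <-> 0 < n /\ wfw n w.
Proof. by []. Qed.

Lemma mstep_mirror a b : bwf a -> bwf b -> mstep a b -> keq (bmirror a) (bmirror b).
Proof.
move=> Ha Hb H.
have Hma := bwf_mirror Ha; have Hmb := bwf_mirror Hb.
case: a b / H Ha Hb Hma Hmb.
- move=> n u v i s _ _ Ha Hb; apply: keq_step Ha Hb _.
  by rewrite /bmirror /= !map_cat /=; exact: ms_cancel.
- move=> n u v i j Hij [n0 Ha] _ _ _.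
  move: Ha; rewrite /= all_cat /= => /and4P [Hu Hi Hj Hv].
  have R : forall u v, wfw n u -> wfw n v ->
      keq (n, u ++ [:: (i, true); (j, true)] ++ v) (n, u ++ [:: (j, true); (i, true)] ++ v).
    move=> u' v'; rewrite /wfw => Hu' Hv'; apply: keq_step; last exact: ms_comm.
      by split => //=; rewrite all_cat Hu' /= Hi Hj Hv'.
    by split => //=; rewrite all_cat Hu' /= Hi Hj Hv'.
  have := keq_inv n0 _ _ R (u := map flip u) (v := map flip v).
  rewrite /winv /bmirror /= !map_cat /= => K; apply: keq_sym; apply: K.
  + by rewrite /= Hi Hj.
  + by rewrite /= Hi Hj.
  + by rewrite /wfw all_map.
  + by rewrite /wfw all_map.
- move=> n u v i [n0 Ha] _ _ _.
  move: Ha; rewrite /= !all_cat /= => /and5P [Hu Hi Hj _ Hv].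
  have R : forall u v, wfw n u -> wfw n v ->
      keq (n, u ++ [:: (i, true); (i.+1, true); (i, true)] ++ v)
          (n, u ++ [:: (i.+1, true); (i, true); (i.+1, true)] ++ v).
    move=> u' v'; rewrite /wfw => Hu' Hv'; apply: keq_step; last exact: ms_braid.
      by split => //=; rewrite all_cat Hu' /= Hi Hj Hv'.
    by split => //=; rewrite all_cat Hu' /= Hi Hj Hv'.
  have := keq_inv n0 _ _ R (u := map flip u) (v := map flip v).
  rewrite /winv /bmirror /= !map_cat /= => K; apply: K.
  + by rewrite /= Hi Hj.
  + by rewrite /= Hi Hj.
  + by rewrite /wfw all_map.
  + by rewrite /wfw all_map.
- move=> n u v _ _ Ha Hb; apply: keq_step Ha Hb _.
  by rewrite /bmirror /= !map_cat; exact: ms_conj.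
- move=> n w s n0 _ _ Ha Hb; apply: keq_step Ha Hb _.
  by rewrite /bmirror /= map_rcons; exact: ms_stab.
Qed.

Lemma mstep_rev a b : bwf a -> bwf b -> mstep a b -> keq (brev a) (brev b).
Proof.
move=> Ha Hb H.
have Hma := bwf_rev Ha; have Hmb := bwf_rev Hb.
case: a b / H Ha Hb Hma Hmb.
- move=> n u v i s _ _ Ha Hb; apply: keq_step Ha Hb _.
  rewrite /brev /= !rev_cat !rev_cons -!cats1 -!catA /=.
  by have := ms_cancel n (rev v) (rev u) i (~~ s); rewrite negbK.
- move=> n u v i j Hij _ _ Ha Hb; apply: keq_sym; apply: keq_step Hb Ha _.
  rewrite /brev /= !rev_cat !rev_cons -!cats1 -!catA /=.
  exact: ms_comm.
- move=> n u v i _ _ Ha Hb; apply: keq_step Ha Hb _.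
  rewrite /brev /= !rev_cat !rev_cons -!cats1 -!catA /=.
  exact: (ms_braid n (rev v) (rev u) i).
- move=> n u v _ _ Ha Hb; apply: keq_step Ha Hb _.
  by rewrite /brev /= !rev_cat; exact: ms_conj.
- move=> n w s n0 Ha0 Hb0 Ha Hb.
  rewrite /brev /= rev_rcons.
  have Hs : bwf (n.+1, rcons (rev w) (n.-1, s)).
    move: (Hb); rewrite /brev /= rev_rcons => -[? H]; split => //; by rewrite /= all_rcons.
  apply: keq_trans (keq_step Ha Hs (ms_stab _ _ n0)) _.
  have Hb' : bwf (n.+1, (n.-1, s) :: rev w) by move: Hb; rewrite /brev /= rev_rcons.
  apply: keq_step Hs Hb' _.
  by rewrite -cats1; exact: (ms_conj _ _ [:: _]).
Qed.

Lemma keq_mirror a b : keq a b -> keq (bmirror a) (bmirror b).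
Proof.
induction 1 as [b|a b _ IH|a b c _ IH1 _ IH2|a b Ha Hb H].
- exact: keq_refl.
- exact: keq_sym.
- exact: keq_trans IH2.
- exact: mstep_mirror.
Qed.

Lemma keq_rev a b : keq a b -> keq (brev a) (brev b).
Proof.
induction 1 as [b|a b _ IH|a b c _ IH1 _ IH2|a b Ha Hb H].
- exact: keq_refl.
- exact: keq_sym.
- exact: keq_trans IH2.
- exact: mstep_rev.
Qed.

Lemma keq_gact g a b : keq a b -> keq (gact g a) (gact g b).
Proof.
case: g => /= H //; [exact: keq_rev | exact: keq_mirror | exact: keq_rev (keq_mirror H)].
Qed.

Lemma brevK b : brev (brev b) = b.
Proof. by case: b => n w; rewrite /brev /= revK. Qed.

Lemma bmirrorK b : bmirror (bmirror b) = b.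
Proof.
case: b => n w; rewrite /bmirror /= -map_comp; congr pair.
by elim: w => //= [[i s]] w ->; rewrite /= negbK.
Qed.

Lemma brev_mirror b : brev (bmirror b) = bmirror (brev b).
Proof. by case: b => n w; rewrite /brev /bmirror /= map_rev. Qed.

Definition gmul (a b : gsym) : gsym :=
  match a, b with
  | gId, x => x | x, gId => x
  | gR, gR => gId | gM, gM => gId | gRM, gRM => gId
  | gR, gM => gRM | gM, gR => gRM
  | gR, gRM => gM | gRM, gR => gM
  | gM, gRM => gR | gRM, gM => gR
  end.

Lemma gact_mul a b x : gact (gmul a b) x = gact a (gact b x).
Proof.
by case: a; case: b; rewrite /= ?brev_mirror ?brevK ?bmirrorK ?brev_mirror ?brevK ?bmirrorK ?brev_mirror ?brevK ?bmirrorK.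
Qed.

Lemma gmulK a b : gmul a (gmul a b) = b.
Proof. by case: a; case: b. Qed.

Lemma gmulC a b : gmul a b = gmul b a.
Proof. by case: a; case: b. Qed.

Lemma gact_invol g x : gact g (gact g x) = x.
Proof. by rewrite -gact_mul; case: g. Qed.

Definition cls (g : gsym) : bool := match g with gR | gM => true | _ => false end.

Section CV.
Variable S : seq fquandle.

Lemma colvec_keq a b : keq a b -> colvec S a = colvec S b.
Proof. by move=> H; apply: eq_map => Q; apply: col_keq. Qed.

Lemma colvec_rm b : colvec S (brev (bmirror b)) = colvec S b.
Proof. by apply: eq_map => Q; case: b => n w; exact: (col_winv Q n w). Qed.

Lemma colvec_gact g k :
  colvec S (gact g k) = if cls g then colvec S (bmirror k) else colvec S k.
Proof.
case: g => //=; [ | exact: colvec_rm].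
by rewrite -{1}(bmirrorK k) colvec_rm.
Qed.
End CV.

Lemma orbit_move K K' k k' g g' : keq K (gact g k) -> keq K' (gact g' k') -> keq k k' ->
  forall X, (exists h, keq X (gact h K)) -> (exists h, keq X (gact h K')).
Proof.
move=> HK HK' Hk X [h HX]; exists (gmul h (gmul g g')).
rewrite !gact_mul; apply: keq_trans HX _; apply: keq_gact.
apply: keq_trans HK _; apply: keq_gact; apply: keq_trans Hk _.
rewrite -{1}(gact_invol g' k'); apply: keq_gact.
exact: keq_sym.
Qed.

Lemma sym_cases k : ~ (chiral k \/ neg_amphicheiral k) -> keq k (brev k) \/ keq k (bmirror k).
Proof.
move=> N.
case: (classic (keq k (brev k))) => H1; first by left.
case: (classic (keq k (bmirror k))) => H2; first by right.
exfalso; apply: N.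
case: (classic (keq k (brev (bmirror k)))) => H3.
  by right.
by left.
Qed.

Unset Implicit Arguments.
Theorem proposition3p7 (Ks Rs : seq braid) (S : seq fquandle) :
  G_closed_knot_set Ks -> orbit_reps Ks Rs ->
  (forall k k', k \in Rs -> k' \in Rs -> ~ keq k k' -> ~ csim S k k') ->
  (forall k k', k \in Rs -> k' \in Rs -> ~ keq k k' -> ~ csim S k (bmirror k')) ->
  (forall k k', k \in Rs -> k' \in Rs -> ~ keq k k' -> ~ csim S (bmirror k) (bmirror k')) ->
  (forall K K', inK Ks K -> inK Ks K' -> csim S K K' -> same_orbit K K') /\
  ((forall k, k \in Rs -> chiral k \/ neg_amphicheiral k -> ~ csim S (bmirror k) k) ->
   forall K K', inK Ks K -> inK Ks K' -> csim S K K' ->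
     keq K' K \/ keq K' (brev (bmirror K))).
Proof.
move=> _ [_ [Hrep _]] HA HB HC.
have key : forall K K', inK Ks K -> inK Ks K' -> csim S K K' ->
    exists k g k' g', [/\ k \in Rs, keq K (gact g k), keq K' (gact g' k'), keq k k' &
       colvec S (gact g k) = colvec S (gact g' k')].
  move=> K K' HK HK' Hs.
  have [k [g [Rk Kk]]] := Hrep K HK.
  have [k' [g' [Rk' Kk']]] := Hrep K' HK'.
  have E : colvec S (gact g k) = colvec S (gact g' k').
    by rewrite -(colvec_keq S Kk) -(colvec_keq S Kk').
  exists k, g, k', g'; split => //.
  case: (classic (keq k k')) => // N; exfalso.
  have N' : ~ keq k' k by move=> H; apply: N; apply: keq_sym.
  move: E; rewrite !colvec_gact; case: (cls g); case: (cls g') => E.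
  - exact: (HC k k' Rk Rk' N E).
  - exact: (HB k' k Rk' Rk N' (esym E)).
  - exact: (HB k k' Rk Rk' N E).
  - exact: (HA k k' Rk Rk' N E).
split.
  move=> K K' HK HK' Hs.
  have [k [g [k' [g' [_ Kk Kk' Hk _]]]]] := key K K' HK HK' Hs.
  move=> X; split; first exact: orbit_move Kk Kk' Hk X.
  exact: orbit_move Kk' Kk (keq_sym Hk) X.
move=> HD K K' HK HK' Hs.
have [k [g [k' [g' [Rk Kk Kk' Hk E]]]]] := key K K' HK HK' Hs.
have Kk2 : keq K' (gact g' k) := keq_trans Kk' (keq_gact g' (keq_sym Hk)).
rewrite -(colvec_keq S (keq_gact g' Hk)) in E.
have Eg : g' = gmul g (gmul g g') by rewrite gmulK.
move: Eg Kk2 E; set d := gmul g g' => Eg Kk2 E.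
rewrite Eg gact_mul in Kk2.
have Kr : keq (gact g (gact gRM k)) (brev (bmirror K)).
  rewrite -gact_mul gmulC gact_mul; apply: (keq_gact gRM); exact: keq_sym.
have cases2 : cls d -> keq k (brev k) \/ keq k (bmirror k).
  move=> cd; apply: sym_cases => Hc; apply: (HD k Rk Hc).
  move: E; rewrite Eg !colvec_gact.
  by case: (g) cd; case: (d) => //= _ E; rewrite E.
case: d Eg Kk2 E cases2 => Eg Kk2 E cases2.
- by left; apply: keq_trans Kk2 (keq_sym Kk).
- case: (cases2 isT) => Hs2.
    left; apply: keq_trans Kk2 _; apply: keq_sym; apply: keq_trans Kk _.
    exact: keq_gact.
  right; apply: keq_trans Kk2 _; apply: keq_trans _ Kr; apply: keq_gact.
  exact: keq_rev.
- case: (cases2 isT) => Hs2.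
    right; apply: keq_trans Kk2 _; apply: keq_trans _ Kr; apply: keq_gact.
    rewrite /= brev_mirror; exact: keq_mirror.
  left; apply: keq_trans Kk2 _; apply: keq_sym; apply: keq_trans Kk _.
  exact: keq_gact.
- by right; apply: keq_trans Kk2 Kr.
Qed.
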